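(* For every $m \ge 1$, the commutator subgroup $TW_{m+2}'$ of the twin group $TW_{m+2}$ has rank (minimal cardinality of a generating set) equal to $2m-1$.
   Context: For $n \ge 2$, the twin group $TW_n$ is the group with generators $\tau_1,\dots,\tau_{n-1}$ and defining relations $\tau_i^2=1$ for all $i$, and $\tau_i\tau_j=\tau_j\tau_i$ whenever $|i-j|>1$. $G'$ denotes the commutator subgroup of a group $G$. *)

(* Defs.v *)
From mathcomp Require Import all_boot.
Set Implicit Arguments. Unset Strict Implicit. Unset Printing Implicit Defensive.

(* Words in the generators tau_1..tau_{n-1} of TW_n; the letter i : 'I_(n.-1)
   stands for tau_(i+1).  Since each tau_i is an involution, the inverse of a
   word is its reversal, so no inverse letters are needed. *)
Definition tw_word (n : nat) := seq 'I_n.-1.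

Inductive tw_eq (n : nat) : tw_word n -> tw_word n -> Prop :=
| tw_sq (i : 'I_n.-1) : tw_eq [:: i; i] [::]
| tw_comm (i j : 'I_n.-1) :
    (i.+1 < j)%N \/ (j.+1 < i)%N -> tw_eq [:: i; j] [:: j; i]
| tw_refl (u : tw_word n) : tw_eq u u
| tw_sym (u v : tw_word n) : tw_eq u v -> tw_eq v u
| tw_trans (u v w : tw_word n) : tw_eq u v -> tw_eq v w -> tw_eq u w
| tw_ctx (a b u v : tw_word n) : tw_eq u v -> tw_eq (a ++ u ++ b) (a ++ v ++ b).

Definition tw_mul n (u v : tw_word n) : tw_word n := u ++ v.
Definition tw_inv n (u : tw_word n) : tw_word n := rev u.
Definition tw_commutator n (u v : tw_word n) : tw_word n :=
  tw_mul (tw_mul (tw_inv u) (tw_inv v)) (tw_mul u v).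

Inductive tw_gen (n : nat) (S : tw_word n -> Prop) : tw_word n -> Prop :=
| tw_gen_base (s : tw_word n) : S s -> tw_gen S s
| tw_gen_one : tw_gen S [::]
| tw_gen_inv (u : tw_word n) : tw_gen S u -> tw_gen S (tw_inv u)
| tw_gen_mul (u v : tw_word n) : tw_gen S u -> tw_gen S v -> tw_gen S (tw_mul u v)
| tw_gen_eq (u v : tw_word n) : tw_gen S u -> tw_eq u v -> tw_gen S v.

Definition tw_derived (n : nat) : tw_word n -> Prop :=
  tw_gen (fun w => exists u v : tw_word n, w = tw_commutator u v).

Definition tw_generates (n k : nat) (H : tw_word n -> Prop)
    (g : 'I_k -> tw_word n) : Prop :=
  forall w, H w <-> tw_gen (fun x => exists i, x = g i) w.

Definition tw_rank_eq (n : nat) (H : tw_word n -> Prop) (r : nat) : Prop :=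
  (exists g : 'I_r -> tw_word n, tw_generates H g) /\
  (forall (k : nat) (g : 'I_k -> tw_word n), tw_generates H g -> (r <= k)%N).

(* Main.v *)
Require Import Defs.
From mathcomp Require Import all_boot all_algebra.
From mathcomp Require Import zify.
From Stdlib Require Import FunctionalExtensionality.
Set Implicit Arguments. Unset Strict Implicit. Unset Printing Implicit Defensive.

Section Gen.
Variable n : nat.
Notation W := (tw_word n).
Notation L := ('I_n.-1).

Lemma tw_catl (u u' v : W) : tw_eq u u' -> tw_eq (u ++ v) (u' ++ v).
Proof. move=> h; exact: (tw_ctx [::] v h). Qed.
Lemma tw_catr (u v v' : W) : tw_eq v v' -> tw_eq (u ++ v) (u ++ v').
Proof. move=> h; have := tw_ctx u [::] h; by rewrite !cats0. Qed.
Lemma tw_cat (u u' v v' : W) : tw_eq u u' -> tw_eq v v' -> tw_eq (u ++ v) (u' ++ v').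
Proof. move=> h1 h2; apply: tw_trans (tw_catl _ h1) (tw_catr _ h2). Qed.
Lemma tw_cons (x : L) (u v : W) : tw_eq u v -> tw_eq (x :: u) (x :: v).
Proof. exact: (tw_catr [:: x]). Qed.

Lemma cc_at (p : W) (x : L) (s : W) : tw_eq (p ++ [:: x, x & s]) (p ++ s).
Proof. exact: (tw_ctx p s (tw_sq x)). Qed.
Lemma sw_at (p : W) (x y : L) (s : W) : (x.+1 < y)%N \/ (y.+1 < x)%N ->
  tw_eq (p ++ [:: x, y & s]) (p ++ [:: y, x & s]).
Proof. move=> h; exact: (tw_ctx p s (tw_comm h)). Qed.

Lemma tw_invr (u : W) : tw_eq (u ++ rev u) [::].
Proof.
elim: u => [|x u IH] /=; first exact: tw_refl.
rewrite rev_cons -cats1 catA.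
have := tw_ctx [:: x] [:: x] IH; rewrite /= => h.
apply: tw_trans h _; exact: (cc_at [::] x [::]).
Qed.
Lemma tw_invl (u : W) : tw_eq (rev u ++ u) [::].
Proof. by have := tw_invr (rev u); rewrite revK. Qed.

Section GS.
Variable S : W -> Prop.
Notation G := (tw_gen S).

Lemma G_cat u v : G u -> G v -> G (u ++ v).
Proof. exact: tw_gen_mul. Qed.
Lemma G_rev u : G u -> G (rev u).
Proof. exact: tw_gen_inv. Qed.
Lemma G_eq u v : tw_eq v u -> G v -> G u.
Proof. by move=> h g; apply: tw_gen_eq g h. Qed.

Lemma G_conj1 : (forall s (x : L), S s -> G (x :: s ++ [:: x])) ->
  forall w, G w -> forall x : L, G (x :: w ++ [:: x]).
Proof.
move=> hS w; elim => {w}.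
- by move=> s Ss x; apply: hS.
- move=> x /=; apply: (G_eq (v := [::])); last exact: tw_gen_one.
  apply: tw_sym; exact: (cc_at [::] x [::]).
- move=> u _ IH x.
  have -> : x :: rev u ++ [:: x] = rev (x :: u ++ [:: x]).
    by rewrite rev_cons rev_cat /= -cats1.
  exact: G_rev.
- move=> u v _ IHu _ IHv x.
  apply: (G_eq (v := (x :: u ++ [:: x]) ++ (x :: v ++ [:: x]))); last exact: G_cat.
  rewrite /tw_mul -!catA /=. rewrite -(catA u [:: x]) /=.
  exact: (cc_at (x :: u) x _).
- move=> u v _ IH h x; apply: (G_eq (v := x :: u ++ [:: x])) => //.
  exact: (tw_ctx [:: x] [:: x] h).
Qed.

Lemma G_conj : (forall s (x : L), S s -> G (x :: s ++ [:: x])) ->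
  forall g w, G w -> G (rev g ++ w ++ g).
Proof.
move=> hS; elim => [|x g IH] w Gw /=; first by rewrite cats0.
rewrite rev_cons -cats1 -!catA /=.
have := IH _ (G_conj1 hS Gw x); by rewrite /= -catA.
Qed.

Lemma G_comm1 : (forall s (x : L), S s -> G (x :: s ++ [:: x])) ->
  (forall x y : L, G [:: x; y; x; y]) ->
  forall (u : W) (y : L), G (rev u ++ y :: u ++ [:: y]).
Proof.
move=> hS hxy; elim => [|x u IH] y /=.
  apply: (G_eq (v := [::])); last exact: tw_gen_one.
  apply: tw_sym; exact: (cc_at [::] y [::]).
apply: (G_eq (v := (rev u ++ [:: x; y; x; y] ++ u) ++ (rev u ++ y :: u ++ [:: y]))).
  rewrite rev_cons -cats1 -!catA /=.
  apply: tw_catr => /=.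
  apply: tw_cons; apply: tw_cons; apply: tw_cons.
  have h := tw_ctx [:: y] (y :: u ++ [:: y]) (tw_invr u). rewrite /= -catA in h.
  apply: tw_trans h _. exact: (cc_at [::] y (u ++ [:: y])).
apply: G_cat; last exact: IH.
exact: G_conj hS _ _ (hxy x y).
Qed.

Lemma G_comm : (forall s (x : L), S s -> G (x :: s ++ [:: x])) ->
  (forall x y : L, G [:: x; y; x; y]) ->
  forall u v : W, G (tw_commutator u v).
Proof.
move=> hS hxy u v; rewrite /tw_commutator /tw_mul /tw_inv -catA.
elim: v => [|y v IH].
  have -> : rev [::] = [::] :> W by [].
  rewrite /= cats0; apply: (G_eq (v := [::])); last exact: tw_gen_one.
  apply: tw_sym; exact: tw_invl.
apply: (G_eq (v := (rev u ++ rev v ++ u ++ v) ++ (rev v ++ (rev u ++ y :: u ++ [:: y]) ++ v))).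
  rewrite rev_cons -cats1 -!catA.
  apply: tw_catr.
  rewrite /= -!catA /=.
  have h := tw_ctx (rev v ++ u) (rev u ++ y :: u ++ [:: y] ++ v) (tw_invr v).
  rewrite -!catA /= in h. apply: tw_trans h _.
  have h2 := tw_ctx (rev v) (y :: u ++ [:: y] ++ v) (tw_invr u).
  rewrite -!catA /= in h2. apply: tw_trans h2 _.
  by rewrite -?catA; apply: tw_refl.
apply: G_cat; first exact: IH.
exact: G_conj hS _ _ (G_comm1 hS hxy u y).
Qed.
End GS.

Lemma gen_mono (S T : W -> Prop) : (forall w, S w -> tw_gen T w) ->
  forall w, tw_gen S w -> tw_gen T w.
Proof.
move=> h w; elim => {w}.
- exact: h.
- exact: tw_gen_one.
- by move=> u _; apply: tw_gen_inv.
- by move=> u v _ ? _ ?; apply: tw_gen_mul.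
- by move=> u v _ ? e; apply: tw_gen_eq e.
Qed.
End Gen.


Definition flip (p : nat -> bool) (i : nat) : nat -> bool := fun j => p j (+) (j == i).

Section Inv.
Variable n : nat.
Notation W := (tw_word n).
Notation L := ('I_n.-1).

Definition cnt (j : nat) (w : W) := count (fun x : L => nat_of_ord x == j) w.

Definition endst (p : nat -> bool) (w : W) : nat -> bool :=
  fun j => p j (+) odd (cnt j w).

Fixpoint phi (F : (nat -> bool) -> nat -> bool) (p : nat -> bool) (w : W) : bool :=
  if w is x :: w' then F p x (+) phi F (flip p x) w' else false.

Lemma endst_cons p (x : L) w : endst (flip p x) w = endst p (x :: w).
Proof.
apply: functional_extensionality => j; rewrite /endst /flip /cnt /= oddD oddb.
by rewrite eq_sym addbA.
Qed.

Lemma endst_cat p u v : endst p (u ++ v) = endst (endst p u) v.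
Proof.
apply: functional_extensionality => j; rewrite /endst /cnt count_cat oddD.
by rewrite addbA.
Qed.

Lemma phi_cat F p u v : phi F p (u ++ v) = phi F p u (+) phi F (endst p u) v.
Proof.
elim: u p => [|x u IH] p /=.
  congr phi; apply: functional_extensionality => j; by rewrite /endst /cnt /= addbF.
by rewrite IH endst_cons addbA.
Qed.

Lemma cnt_eq u v : tw_eq u v -> forall j, odd (cnt j u) = odd (cnt j v).
Proof.
elim => {u v}.
- move=> i j; rewrite /cnt /=; by case: (nat_of_ord i == j).
- move=> i k _ j; rewrite /cnt /=; by rewrite addnCA.
- by [].
- by move=> u v _ h j; rewrite h.
- by move=> u v w _ h1 _ h2 j; rewrite h1 h2.
- move=> a b u v _ h j; rewrite /cnt !count_cat !oddD. by have := h j; rewrite /cnt => ->.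
Qed.

Lemma endst_eq u v p : tw_eq u v -> endst p u = endst p v.
Proof.
move=> h; apply: functional_extensionality => j; by rewrite /endst (cnt_eq h).
Qed.

Variable F : (nat -> bool) -> nat -> bool.
Hypothesis HF1 : forall p i, F (flip p i) i = F p i.
Hypothesis HF2 : forall p (i j : nat), (i.+1 < j)%N \/ (j.+1 < i)%N ->
  F p i (+) F (flip p i) j = F p j (+) F (flip p j) i.

Lemma phi_eq u v : tw_eq u v -> forall p, phi F p u = phi F p v.
Proof.
elim => {u v}.
- move=> i p /=; by rewrite HF1 addbF addbb.
- move=> i j h p /=; by rewrite !addbF HF2.
- by [].
- by move=> u v _ h p; rewrite h.
- by move=> u v w _ h1 _ h2 p; rewrite h1 h2.
- move=> a b u v e h p; rewrite !phi_cat h.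
  by rewrite (endst_eq _ e).
Qed.

Definition p0 : nat -> bool := fun _ => false.
Definition zp (w : W) := forall j, odd (cnt j w) = false.

Lemma endst_zp u : zp u -> endst p0 u = p0.
Proof. move=> h; apply: functional_extensionality => j; by rewrite /endst h. Qed.

Lemma phi_hom u v : zp u -> phi F p0 (u ++ v) = phi F p0 u (+) phi F p0 v.
Proof. by move=> h; rewrite phi_cat endst_zp. Qed.

Lemma phi_rev u : zp u -> phi F p0 (rev u) = phi F p0 u.
Proof.
move=> h; have := phi_eq (tw_invr u) p0; rewrite phi_hom //=.
by case: (phi F p0 u); case: (phi F p0 (rev u)).
Qed.
End Inv.

Lemma zp_eq n (u v : tw_word n) : tw_eq u v -> zp u -> zp v.
Proof. by move=> e h j; rewrite -(cnt_eq e). Qed.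

Lemma zp_derived n (w : tw_word n) : tw_derived w -> zp w.
Proof.
elim => {w}.
- move=> s [u [v ->]] j; rewrite /cnt /tw_commutator /tw_mul /tw_inv !count_cat !count_rev.
  rewrite !oddD; case: (odd (count _ u)); by case: (odd (count _ v)).
- by move=> j.
- by move=> u _ h j; rewrite /cnt /tw_inv count_rev; apply: h.
- by move=> u v _ h1 _ h2 j; rewrite /cnt /tw_mul count_cat oddD h1 h2.
- by move=> u v _ h e; apply: zp_eq e h.
Qed.


Ltac bsolve :=
  repeat match goal with
  | |- context [?a == ?b :> nat] =>
      first [ rewrite (_ : (a == b) = true); last (apply/eqP; lia)
            | rewrite (_ : (a == b) = false); last (apply/eqP; lia)
            | case: (a =P b) => ?; try subst ]
  end;
  repeat match goal with |- context [?p ?x] => is_var p; case: (p x) end;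
  try done.

Definition FA (k : nat) (p : nat -> bool) (i : nat) : bool := (i == k.+1) && p k.
Definition FB (k : nat) (p : nat -> bool) (i : nat) : bool :=
  ((i == k.+2) && p k && p k.+1) (+) ((i == k) && p k.+1 && p k.+2).

Lemma FA1 k p i : FA k (flip p i) i = FA k p i.
Proof. rewrite /FA /flip; bsolve. Qed.
Lemma FA2 k p (i j : nat) : (i.+1 < j)%N \/ (j.+1 < i)%N ->
  FA k p i (+) FA k (flip p i) j = FA k p j (+) FA k (flip p j) i.
Proof. move=> h; rewrite /FA /flip; bsolve. Qed.
Lemma FB1 k p i : FB k (flip p i) i = FB k p i.
Proof. rewrite /FB /flip; bsolve. Qed.
Lemma FB2 k p (i j : nat) : (i.+1 < j)%N \/ (j.+1 < i)%N ->
  FB k p i (+) FB k (flip p i) j = FB k p j (+) FB k (flip p j) i.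
Proof. move=> h; rewrite /FB /flip; bsolve. Qed.

Ltac nadj := lia.

Lemma Cb (n k : nat) (b c : 'I_n.-1) (vb : nat_of_ord b = k) (vc : nat_of_ord c = k.+1) :
  tw_eq [:: b; b; c; b; c; b] [:: c; b; c; b].
Proof.
  apply: (@tw_trans _ _ [:: c; b; c; b]); first exact: (@cc_at _ [:: ] b [:: c; b; c; b]).
  apply: tw_sym.
  exact: tw_refl.
Qed.

Lemma Cc (n k : nat) (b c : 'I_n.-1) (vb : nat_of_ord b = k) (vc : nat_of_ord c = k.+1) :
  tw_eq [:: c; b; c; b; c; c] [:: c; b; c; b].
Proof.
  apply: (@tw_trans _ _ [:: c; b; c; b]); first exact: (@cc_at _ [:: c; b; c; b] c [:: ]).
  apply: tw_sym.
  exact: tw_refl.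
Qed.

Lemma Ca (n k : nat) (a b c : 'I_n.-1) (va : nat_of_ord a = k) (vb : nat_of_ord b = k.+1) (vc : nat_of_ord c = k.+2) :
  tw_eq [:: a; b; c; b; c; a] [:: a; b; a; b; b; c; b; c; c; b; a; b; a; c].
Proof.
  apply: (@tw_trans _ _ [:: a; b; c; b; a; c]); first exact: (@sw_at _ [:: a; b; c; b] c a [:: ] ltac:(nadj)).
  apply: tw_sym.
  apply: (@tw_trans _ _ [:: a; b; a; c; b; c; c; b; a; b; a; c]); first exact: (@cc_at _ [:: a; b; a] b [:: c; b; c; c; b; a; b; a; c]).
  apply: (@tw_trans _ _ [:: a; b; a; c; b; b; a; b; a; c]); first exact: (@cc_at _ [:: a; b; a; c; b] c [:: b; a; b; a; c]).
  apply: (@tw_trans _ _ [:: a; b; a; c; a; b; a; c]); first exact: (@cc_at _ [:: a; b; a; c] b [:: a; b; a; c]).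
  apply: (@tw_trans _ _ [:: a; b; a; a; c; b; a; c]); first exact: (@sw_at _ [:: a; b; a] c a [:: b; a; c] ltac:(nadj)).
  apply: (@tw_trans _ _ [:: a; b; c; b; a; c]); first exact: (@cc_at _ [:: a; b] a [:: c; b; a; c]).
  exact: tw_refl.
Qed.

Lemma Cx (n k : nat) (b c x : 'I_n.-1) (vb : nat_of_ord b = k) (vc : nat_of_ord c = k.+1) (hxb : (x.+1 < b)%N \/ (b.+1 < x)%N) (hxc : (x.+1 < c)%N \/ (c.+1 < x)%N) :
  tw_eq [:: x; b; c; b; c; x] [:: b; c; b; c].
Proof.
  apply: (@tw_trans _ _ [:: x; b; c; b; x; c]); first exact: (@sw_at _ [:: x; b; c; b] c x [:: ] ltac:(nadj)).
  apply: (@tw_trans _ _ [:: x; b; c; x; b; c]); first exact: (@sw_at _ [:: x; b; c] b x [:: c] ltac:(nadj)).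
  apply: (@tw_trans _ _ [:: x; b; x; c; b; c]); first exact: (@sw_at _ [:: x; b] c x [:: b; c] ltac:(nadj)).
  apply: (@tw_trans _ _ [:: x; x; b; c; b; c]); first exact: (@sw_at _ [:: x] b x [:: c; b; c] ltac:(nadj)).
  apply: (@tw_trans _ _ [:: b; c; b; c]); first exact: (@cc_at _ [:: ] x [:: b; c; b; c]).
  apply: tw_sym.
  exact: tw_refl.
Qed.

Lemma Ed (n k : nat) (b c d : 'I_n.-1) (vb : nat_of_ord b = k) (vc : nat_of_ord c = k.+1) (vd : nat_of_ord d = k.+2) :
  tw_eq [:: d; d; b; c; b; c; d; d] [:: b; c; b; c].
Proof.
  apply: (@tw_trans _ _ [:: b; c; b; c; d; d]); first exact: (@cc_at _ [:: ] d [:: b; c; b; c; d; d]).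
  apply: (@tw_trans _ _ [:: b; c; b; c]); first exact: (@cc_at _ [:: b; c; b; c] d [:: ]).
  apply: tw_sym.
  exact: tw_refl.
Qed.

Lemma Eb (n k : nat) (b c d : 'I_n.-1) (vb : nat_of_ord b = k) (vc : nat_of_ord c = k.+1) (vd : nat_of_ord d = k.+2) :
  tw_eq [:: b; d; b; c; b; c; d; b] [:: d; c; b; c; b; d].
Proof.
  apply: (@tw_trans _ _ [:: b; b; d; c; b; c; d; b]); first exact: (@sw_at _ [:: b] d b [:: c; b; c; d; b] ltac:(nadj)).
  apply: (@tw_trans _ _ [:: d; c; b; c; d; b]); first exact: (@cc_at _ [:: ] b [:: d; c; b; c; d; b]).
  apply: (@tw_trans _ _ [:: d; c; b; c; b; d]); first exact: (@sw_at _ [:: d; c; b; c] d b [:: ] ltac:(nadj)).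
  apply: tw_sym.
  exact: tw_refl.
Qed.

Lemma Ec (n k : nat) (b c d : 'I_n.-1) (vb : nat_of_ord b = k) (vc : nat_of_ord c = k.+1) (vd : nat_of_ord d = k.+2) :
  tw_eq [:: c; d; b; c; b; c; d; c] [:: c; d; c; d; d; c; b; c; b; d; d; c; d; c].
Proof.
  apply: tw_sym.
  apply: (@tw_trans _ _ [:: c; d; c; c; b; c; b; d; d; c; d; c]); first exact: (@cc_at _ [:: c; d; c] d [:: c; b; c; b; d; d; c; d; c]).
  apply: (@tw_trans _ _ [:: c; d; b; c; b; d; d; c; d; c]); first exact: (@cc_at _ [:: c; d] c [:: b; c; b; d; d; c; d; c]).
  apply: (@tw_trans _ _ [:: c; d; b; c; b; c; d; c]); first exact: (@cc_at _ [:: c; d; b; c; b] d [:: c; d; c]).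
  exact: tw_refl.
Qed.

Lemma Ea (n k : nat) (a b c d : 'I_n.-1) (va : nat_of_ord a = k) (vb : nat_of_ord b = k.+1) (vc : nat_of_ord c = k.+2) (vd : nat_of_ord d = k.+3) :
  tw_eq [:: a; d; b; c; b; c; d; a] [:: a; b; a; b; d; b; c; b; c; d; d; c; d; c; c; b; a; b; a; c; c; d; c; d].
Proof.
  apply: (@tw_trans _ _ [:: a; b; d; c; b; c; d; a]); first exact: (@sw_at _ [:: a] d b [:: c; b; c; d; a] ltac:(nadj)).
  apply: (@tw_trans _ _ [:: a; b; d; c; b; c; a; d]); first exact: (@sw_at _ [:: a; b; d; c; b; c] d a [:: ] ltac:(nadj)).
  apply: (@tw_trans _ _ [:: a; b; d; c; b; a; c; d]); first exact: (@sw_at _ [:: a; b; d; c; b] c a [:: d] ltac:(nadj)).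
  apply: tw_sym.
  apply: (@tw_trans _ _ [:: a; b; a; b; b; d; c; b; c; d; d; c; d; c; c; b; a; b; a; c; c; d; c; d]); first exact: (@sw_at _ [:: a; b; a; b] d b [:: c; b; c; d; d; c; d; c; c; b; a; b; a; c; c; d; c; d] ltac:(nadj)).
  apply: (@tw_trans _ _ [:: a; b; a; d; c; b; c; d; d; c; d; c; c; b; a; b; a; c; c; d; c; d]); first exact: (@cc_at _ [:: a; b; a] b [:: d; c; b; c; d; d; c; d; c; c; b; a; b; a; c; c; d; c; d]).
  apply: (@tw_trans _ _ [:: a; b; a; d; c; b; c; c; d; c; c; b; a; b; a; c; c; d; c; d]); first exact: (@cc_at _ [:: a; b; a; d; c; b; c] d [:: c; d; c; c; b; a; b; a; c; c; d; c; d]).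
  apply: (@tw_trans _ _ [:: a; b; a; d; c; b; d; c; c; b; a; b; a; c; c; d; c; d]); first exact: (@cc_at _ [:: a; b; a; d; c; b] c [:: d; c; c; b; a; b; a; c; c; d; c; d]).
  apply: (@tw_trans _ _ [:: a; b; a; d; c; b; d; b; a; b; a; c; c; d; c; d]); first exact: (@cc_at _ [:: a; b; a; d; c; b; d] c [:: b; a; b; a; c; c; d; c; d]).
  apply: (@tw_trans _ _ [:: a; b; a; d; c; b; b; d; a; b; a; c; c; d; c; d]); first exact: (@sw_at _ [:: a; b; a; d; c; b] d b [:: a; b; a; c; c; d; c; d] ltac:(nadj)).
  apply: (@tw_trans _ _ [:: a; b; a; d; c; d; a; b; a; c; c; d; c; d]); first exact: (@cc_at _ [:: a; b; a; d; c] b [:: d; a; b; a; c; c; d; c; d]).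
  apply: (@tw_trans _ _ [:: a; b; a; d; c; a; d; b; a; c; c; d; c; d]); first exact: (@sw_at _ [:: a; b; a; d; c] d a [:: b; a; c; c; d; c; d] ltac:(nadj)).
  apply: (@tw_trans _ _ [:: a; b; a; d; a; c; d; b; a; c; c; d; c; d]); first exact: (@sw_at _ [:: a; b; a; d] c a [:: d; b; a; c; c; d; c; d] ltac:(nadj)).
  apply: (@tw_trans _ _ [:: a; b; a; a; d; c; d; b; a; c; c; d; c; d]); first exact: (@sw_at _ [:: a; b; a] d a [:: c; d; b; a; c; c; d; c; d] ltac:(nadj)).
  apply: (@tw_trans _ _ [:: a; b; d; c; d; b; a; c; c; d; c; d]); first exact: (@cc_at _ [:: a; b] a [:: d; c; d; b; a; c; c; d; c; d]).
  apply: (@tw_trans _ _ [:: a; b; d; c; d; b; a; d; c; d]); first exact: (@cc_at _ [:: a; b; d; c; d; b; a] c [:: d; c; d]).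
  apply: (@tw_trans _ _ [:: a; b; d; c; d; b; d; a; c; d]); first exact: (@sw_at _ [:: a; b; d; c; d; b] a d [:: c; d] ltac:(nadj)).
  apply: (@tw_trans _ _ [:: a; b; d; c; d; d; b; a; c; d]); first exact: (@sw_at _ [:: a; b; d; c; d] b d [:: a; c; d] ltac:(nadj)).
  apply: (@tw_trans _ _ [:: a; b; d; c; b; a; c; d]); first exact: (@cc_at _ [:: a; b; d; c] d [:: b; a; c; d]).
  exact: tw_refl.
Qed.

Lemma Ef (n k : nat) (b c d f : 'I_n.-1) (vb : nat_of_ord b = k) (vc : nat_of_ord c = k.+1) (vd : nat_of_ord d = k.+2) (vf : nat_of_ord f = k.+3) :
  tw_eq [:: f; d; b; c; b; c; d; f] [:: f; d; f; d; d; b; c; b; c; d; d; f; d; f].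
Proof.
  apply: tw_sym.
  apply: (@tw_trans _ _ [:: f; d; f; b; c; b; c; d; d; f; d; f]); first exact: (@cc_at _ [:: f; d; f] d [:: b; c; b; c; d; d; f; d; f]).
  apply: (@tw_trans _ _ [:: f; d; f; b; c; b; c; f; d; f]); first exact: (@cc_at _ [:: f; d; f; b; c; b; c] d [:: f; d; f]).
  apply: (@tw_trans _ _ [:: f; d; f; b; c; b; f; c; d; f]); first exact: (@sw_at _ [:: f; d; f; b; c; b] c f [:: d; f] ltac:(nadj)).
  apply: (@tw_trans _ _ [:: f; d; f; b; c; f; b; c; d; f]); first exact: (@sw_at _ [:: f; d; f; b; c] b f [:: c; d; f] ltac:(nadj)).
  apply: (@tw_trans _ _ [:: f; d; f; b; f; c; b; c; d; f]); first exact: (@sw_at _ [:: f; d; f; b] c f [:: b; c; d; f] ltac:(nadj)).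
  apply: (@tw_trans _ _ [:: f; d; f; f; b; c; b; c; d; f]); first exact: (@sw_at _ [:: f; d; f] b f [:: c; b; c; d; f] ltac:(nadj)).
  apply: (@tw_trans _ _ [:: f; d; b; c; b; c; d; f]); first exact: (@cc_at _ [:: f; d] f [:: b; c; b; c; d; f]).
  exact: tw_refl.
Qed.

Lemma Ex (n k : nat) (b c d x : 'I_n.-1) (vb : nat_of_ord b = k) (vc : nat_of_ord c = k.+1) (vd : nat_of_ord d = k.+2) (hxb : (x.+1 < b)%N \/ (b.+1 < x)%N) (hxc : (x.+1 < c)%N \/ (c.+1 < x)%N) (hxd : (x.+1 < d)%N \/ (d.+1 < x)%N) :
  tw_eq [:: x; d; b; c; b; c; d; x] [:: d; b; c; b; c; d].
Proof.
  apply: (@tw_trans _ _ [:: x; d; b; c; b; c; x; d]); first exact: (@sw_at _ [:: x; d; b; c; b; c] d x [:: ] ltac:(nadj)).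
  apply: (@tw_trans _ _ [:: x; d; b; c; b; x; c; d]); first exact: (@sw_at _ [:: x; d; b; c; b] c x [:: d] ltac:(nadj)).
  apply: (@tw_trans _ _ [:: x; d; b; c; x; b; c; d]); first exact: (@sw_at _ [:: x; d; b; c] b x [:: c; d] ltac:(nadj)).
  apply: (@tw_trans _ _ [:: x; d; b; x; c; b; c; d]); first exact: (@sw_at _ [:: x; d; b] c x [:: b; c; d] ltac:(nadj)).
  apply: (@tw_trans _ _ [:: x; d; x; b; c; b; c; d]); first exact: (@sw_at _ [:: x; d] b x [:: c; b; c; d] ltac:(nadj)).
  apply: (@tw_trans _ _ [:: x; x; d; b; c; b; c; d]); first exact: (@sw_at _ [:: x] d x [:: b; c; b; c; d] ltac:(nadj)).
  apply: (@tw_trans _ _ [:: d; b; c; b; c; d]); first exact: (@cc_at _ [:: ] x [:: d; b; c; b; c; d]).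
  apply: tw_sym.
  exact: tw_refl.
Qed.

Lemma Q0 (n k : nat) (x : 'I_n.-1)  :
  tw_eq [:: x; x; x; x] [:: ].
Proof.
  apply: (@tw_trans _ _ [:: x; x]); first exact: (@cc_at _ [:: ] x [:: x; x]).
  apply: (@tw_trans _ _ [:: ]); first exact: (@cc_at _ [:: ] x [:: ]).
  apply: tw_sym.
  exact: tw_refl.
Qed.

Lemma Qx (n k : nat) (x y : 'I_n.-1) (hxy : (x.+1 < y)%N \/ (y.+1 < x)%N) :
  tw_eq [:: x; y; x; y] [:: ].
Proof.
  apply: (@tw_trans _ _ [:: x; x; y; y]); first exact: (@sw_at _ [:: x] y x [:: y] ltac:(nadj)).
  apply: (@tw_trans _ _ [:: y; y]); first exact: (@cc_at _ [:: ] x [:: y; y]).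
  apply: (@tw_trans _ _ [:: ]); first exact: (@cc_at _ [:: ] y [:: ]).
  apply: tw_sym.
  exact: tw_refl.
Qed.

Lemma Dv (n k : nat) (b c d : 'I_n.-1) (vb : nat_of_ord b = k) (vc : nat_of_ord c = k.+1) (vd : nat_of_ord d = k.+2) :
  tw_eq [:: b; d; c; d; b; d; c; d] [:: d; b; c; b; c; d].
Proof.
  apply: (@tw_trans _ _ [:: b; d; c; d; d; b; c; d]); first exact: (@sw_at _ [:: b; d; c; d] b d [:: c; d] ltac:(nadj)).
  apply: (@tw_trans _ _ [:: b; d; c; b; c; d]); first exact: (@cc_at _ [:: b; d; c] d [:: b; c; d]).
  apply: (@tw_trans _ _ [:: d; b; c; b; c; d]); first exact: (@sw_at _ [:: ] b d [:: c; b; c; d] ltac:(nadj)).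
  apply: tw_sym.
  exact: tw_refl.
Qed.


Lemma GE n (S : tw_word n -> Prop) (w u : tw_word n) :
  tw_gen S w -> tw_eq u w -> tw_gen S u.
Proof. by move=> g e; apply: tw_gen_eq g (tw_sym e). Qed.

Section Main.
Variable m : nat.
Hypothesis hm : (1 <= m)%N.
Notation Wm := (tw_word (m + 2)).
Notation Lm := ('I_(m + 2).-1).

Lemma ltm : (0 < (m + 2).-1)%N. Proof. by rewrite addn2. Qed.
Definition o0 : Lm := Ordinal ltm.
Definition Lt (k : nat) : Lm := insubd o0 k.
Lemma vL k : (k <= m)%N -> nat_of_ord (Lt k) = k.
Proof. move=> h; rewrite /Lt val_insubd ifT //; lia. Qed.
Lemma Lval (x : Lm) : x = Lt x.
Proof. apply: val_inj => /=; rewrite vL //; have := ltn_ord x; lia. Qed.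

Definition cw i : Wm := [:: Lt i; Lt i.+1; Lt i; Lt i.+1].
Definition ew i : Wm := [:: Lt i.+2; Lt i; Lt i.+1; Lt i; Lt i.+1; Lt i.+2].
Definition gg (t : 'I_(2 * m - 1)) : Wm := if (t < m)%N then cw t else ew (t - m).
Definition Sg (w : Wm) := exists t, w = gg t.
Notation G := (tw_gen Sg).

Lemma Gc i : (i < m)%N -> G (cw i).
Proof.
move=> h; have h' : (i < 2 * m - 1)%N by lia.
apply: tw_gen_base; exists (Ordinal h'); by rewrite /gg /= h.
Qed.
Lemma Ge i : (i.+1 < m)%N -> G (ew i).
Proof.
move=> h; have h' : (i + m < 2 * m - 1)%N by lia.
apply: tw_gen_base; exists (Ordinal h'); rewrite /gg /=.
have -> : (i + m < m)%N = false by lia.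
by rewrite addnK.
Qed.

Lemma hS s (x : Lm) : Sg s -> G (x :: s ++ [:: x]).
Proof.
move=> [t ->]; rewrite (Lval x); move: (nat_of_ord x) (ltn_ord x) => v.
move=> hv; have {hv} hv : (v <= m)%N by lia.
rewrite /gg; case: ifP => ht.
- move: (nat_of_ord t) ht => i hi.
  have [Ev|n1] := eqVneq v i.
    subst v; apply: (@GE _ _ (rev (cw i))); first exact: G_rev (Gc hi).
    apply: (@Cb _ i (Lt i) (Lt i.+1)); apply: vL; lia.
  have [Ev|n2] := eqVneq v i.+1.
    subst v; apply: (@GE _ _ (rev (cw i))); first exact: G_rev (Gc hi).
    apply: (@Cc _ i (Lt i) (Lt i.+1)); apply: vL; lia.
  have [Ev|n3] := eqVneq v i.+2.
    subst v; by apply: Ge; lia.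
  have [Ei|n4] := eqVneq i v.+1.
    subst i; apply: (@GE _ _ (cw v ++ cw v.+1 ++ rev (ew v))).
      apply: G_cat; first by apply: Gc; lia.
      apply: G_cat; first by apply: Gc; lia.
      by apply: G_rev; apply: Ge; lia.
    apply: (@Ca _ v (Lt v) (Lt v.+1) (Lt v.+2)); apply: vL; lia.
  apply: (@GE _ _ (cw i)); first by apply: Gc; lia.
  move/eqP: n1 => n1; move/eqP: n2 => n2; move/eqP: n3 => n3; move/eqP: n4 => n4.
  apply: (@Cx _ i (Lt i) (Lt i.+1) (Lt v)); rewrite !vL; lia.
- have hi : ((t - m).+1 < m)%N.
    have := ltn_ord t; move/negbT: ht; rewrite -leqNgt; lia.
  move: (t - m) hi => i hi.
  have [Ev|n1] := eqVneq v i.+2.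
    subst v; apply: (@GE _ _ (cw i)); first by apply: Gc; lia.
    apply: (@Ed _ i (Lt i) (Lt i.+1) (Lt i.+2)); apply: vL; lia.
  have [Ev|n2] := eqVneq v i.
    subst v; apply: (@GE _ _ (rev (ew i))); first exact: G_rev (Ge hi).
    apply: (@Eb _ i (Lt i) (Lt i.+1) (Lt i.+2)); apply: vL; lia.
  have [Ev|n3] := eqVneq v i.+1.
    subst v; apply: (@GE _ _ (cw i.+1 ++ rev (ew i) ++ rev (cw i.+1))).
      apply: G_cat; first by apply: Gc; lia.
      apply: G_cat; first exact: G_rev (Ge hi).
      by apply: G_rev; apply: Gc; lia.
    apply: (@Ec _ i (Lt i) (Lt i.+1) (Lt i.+2)); apply: vL; lia.
  have [Ev|n4] := eqVneq v i.+3.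
    subst v; apply: (@GE _ _ (rev (cw i.+2) ++ ew i ++ cw i.+2)).
      apply: G_cat; first by apply: G_rev; apply: Gc; lia.
      apply: G_cat; first by apply: Ge; lia.
      by apply: Gc; lia.
    apply: (@Ef _ i (Lt i) (Lt i.+1) (Lt i.+2) (Lt i.+3)); apply: vL; lia.
  have [Ei|n5] := eqVneq i v.+1.
    subst i; apply: (@GE _ _ (cw v ++ ew v.+1 ++ rev (cw v.+2) ++ rev (ew v) ++ cw v.+2)).
      apply: G_cat; first by apply: Gc; lia.
      apply: G_cat; first by apply: Ge; lia.
      apply: G_cat; first by apply: G_rev; apply: Gc; lia.
      apply: G_cat; first by apply: G_rev; apply: Ge; lia.
      by apply: Gc; lia.
    apply: (@Ea _ v (Lt v) (Lt v.+1) (Lt v.+2) (Lt v.+3)); apply: vL; lia.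
  apply: (@GE _ _ (ew i)); first by apply: Ge; lia.
  move/eqP: n1 => n1; move/eqP: n2 => n2; move/eqP: n3 => n3; move/eqP: n4 => n4; move/eqP: n5 => n5.
  apply: (@Ex _ i (Lt i) (Lt i.+1) (Lt i.+2) (Lt v)); rewrite !vL; lia.
Qed.

Lemma hxy (x y : Lm) : G [:: x; y; x; y].
Proof.
rewrite (Lval x) (Lval y); move: (nat_of_ord x) (ltn_ord x) (nat_of_ord y) (ltn_ord y) => u hu v hv.
have {hu} hu : (u <= m)%N by lia. have {hv} hv : (v <= m)%N by lia.
have [Ev|n1] := eqVneq u v.
  subst v; apply: (@GE _ _ [::]); first exact: tw_gen_one.
  exact: (@Q0 _ 0 (Lt u)).
have [Ev|n2] := eqVneq v u.+1.
  subst v; by apply: Gc; lia.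
have [Ev|n3] := eqVneq u v.+1.
  subst u; have h : G (cw v) by apply: Gc; lia.
  exact: (G_rev h).
apply: (@GE _ _ [::]); first exact: tw_gen_one.
move/eqP: n1 => n1; move/eqP: n2 => n2; move/eqP: n3 => n3.
apply: (@Q0 _ 0 (Lt u)) || apply: (@Qx _ 0 (Lt u) (Lt v)); rewrite !vL; lia.
Qed.

Lemma gg_derived t : tw_derived (gg t).
Proof.
rewrite /gg; case: ifP => ht.
  apply: tw_gen_base; exists [:: Lt t], [:: Lt t.+1]; by [].
have hi : ((t - m).+1 < m)%N.
  have := ltn_ord t; move/negbT: ht; rewrite -leqNgt; lia.
move: (t - m) hi => i hi.
apply: (@tw_gen_eq _ _ (tw_commutator [:: Lt i] [:: Lt i.+2; Lt i.+1; Lt i.+2])).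
  apply: tw_gen_base; by exists [:: Lt i], [:: Lt i.+2; Lt i.+1; Lt i.+2].
apply: (@Dv _ i (Lt i) (Lt i.+1) (Lt i.+2)); apply: vL; lia.
Qed.

Lemma upper : tw_generates (@tw_derived (m + 2)) gg.
Proof.
move=> w; split.
  apply: gen_mono => s [u [v ->]].
  exact: (G_comm hS hxy).
apply: gen_mono => s [t ->]; exact: gg_derived.
Qed.
End Main.


Section Lower.
Import GRing.Theory.
Local Open Scope ring_scope.
Variable m : nat.
Hypothesis hm : (1 <= m)%N.
Notation Wm := (tw_word (m + 2)%N).
Notation r := (2 * m - 1)%N.

Definition Fam (t : nat) (p : nat -> bool) (i : nat) : bool :=
  if (t < m)%N then FA t p i (+) FB t p i else FB (t - m) p i.
Lemma Fam1 t p i : Fam t (flip p i) i = Fam t p i.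
Proof. by rewrite /Fam; case: ifP => _; rewrite ?FA1 FB1. Qed.
Lemma xor4 (a1 a2 a3 a4 b1 b2 b3 b4 : bool) : a1 (+) a2 = a3 (+) a4 -> b1 (+) b2 = b3 (+) b4 ->
  (a1 (+) b1) (+) (a2 (+) b2) = (a3 (+) b3) (+) (a4 (+) b4).
Proof. by case: a1; case: a2; case: a3; case: a4; case: b1; case: b2; case: b3; case: b4. Qed.
Lemma Fam2 t p (i j : nat) : (i.+1 < j)%N \/ (j.+1 < i)%N ->
  Fam t p i (+) Fam t (flip p i) j = Fam t p j (+) Fam t (flip p j) i.
Proof.
move=> h; rewrite /Fam; case: ifP => _; last exact: FB2.
exact: xor4 (FA2 _ _ h) (FB2 _ _ h).
Qed.

Definition Psi (w : Wm) : 'rV['F_2]_r := \row_(t < r) (phi (Fam t) p0 w)%:R.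

Lemma F2add (b c : bool) : ((b (+) c)%:R : 'F_2) = b%:R + c%:R.
Proof. by case: b; case: c => //=; apply: val_inj. Qed.

Lemma Psi_eq u v : tw_eq u v -> Psi u = Psi v.
Proof. move=> e; apply/rowP => t; by rewrite !mxE (phi_eq (@Fam1 t) (@Fam2 t) e). Qed.
Lemma Psi_cat u v : zp u -> Psi (u ++ v) = Psi u + Psi v.
Proof. move=> h; apply/rowP => t; by rewrite !mxE phi_hom // F2add. Qed.
Lemma Psi_rev u : zp u -> Psi (rev u) = Psi u.
Proof. move=> h; apply/rowP => t; by rewrite !mxE phi_rev //; [apply: Fam1 | apply: Fam2]. Qed.
Lemma Psi_nil : Psi [::] = 0.
Proof. by apply/rowP => t; rewrite !mxE. Qed.

Lemma phi_gg (t t' : 'I_r) : phi (Fam t') p0 (@gg m t) = (t' == t).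
Proof.
rewrite -val_eqE /=; have ha := ltn_ord t; have hb := ltn_ord t'.
rewrite /gg /=; case: ifP => ht.
  rewrite /cw /= !vL; try lia.
  rewrite /Fam; case: ifP => hb'; rewrite /FA /FB /flip /p0; bsolve.
rewrite /ew /= !vL; try lia.
rewrite /Fam; case: ifP => hb'; rewrite /FA /FB /flip /p0; bsolve.
Qed.
Lemma Psi_gg t : Psi (@gg m t) = delta_mx 0 t.
Proof. by apply/rowP => t'; rewrite !mxE phi_gg eqxx. Qed.

Lemma lower k (g' : 'I_k -> Wm) : tw_generates (@tw_derived (m + 2)%N) g' -> (r <= k)%N.
Proof.
move=> hg.
pose M : 'M['F_2]_(k, r) := \matrix_(i < k) Psi (g' i).
have key : forall w, tw_gen (fun x => exists i, x = g' i) w -> zp w /\ (Psi w <= M)%MS.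
  move=> w; elim => {w}.
  - move=> s [i ->]; split.
      apply: zp_derived; apply/hg; apply: tw_gen_base; by exists i.
    have -> : Psi (g' i) = row i M by apply/rowP => j; rewrite !mxE.
    exact: row_sub.
  - split; first by move=> j. by rewrite Psi_nil sub0mx.
  - move=> u _ [zu su]; split.
      by move=> j; rewrite /cnt /tw_inv count_rev; apply: zu.
    by rewrite /tw_inv Psi_rev.
  - move=> u v _ [zu su] _ [zv sv]; split.
      by move=> j; have := zu j; have := zv j; rewrite /cnt /tw_mul count_cat oddD => -> ->.
    by rewrite /tw_mul Psi_cat // addmx_sub.
  - move=> u v _ [zu su] e; split; first exact: zp_eq e zu. by rewrite -(Psi_eq e).
have h1 : (1%:M <= M)%MS.
  apply/row_subP => t; rewrite row1.
  have := (key _ ((hg _).1 (gg_derived hm t))).2. by rewrite Psi_gg.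
have := mxrankS h1; rewrite mxrank1 => h2.
exact: leq_trans h2 (rank_leq_row M).
Qed.
End Lower.



Theorem theorem1p2 (m : nat) (hm : (1 <= m)%N) :
  @tw_rank_eq (m + 2) (@tw_derived (m + 2)) (2 * m - 1).
Proof.
split; first by exists (@gg m); exact: upper.
move=> k g h; exact: (@lower m hm k g h).
Qed.
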